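(* Let $\mathcal K$ be a variety of WHB-algebras that has a tense companion $\mathcal N$. Then $\mathcal K$ has equationally definable principal congruences if and only if $\mathcal N$ has equationally definable principal congruences.
   Context: A WHB-algebra is an algebra $(A,\wedge,\vee,\to,\leftarrow,0,1)$ such that $(A,\wedge,\vee,0,1)$ is a bounded distributive lattice and for all $a,b,c\in A$: $a\to a=1$; $a\to(b\wedge c)=(a\to b)\wedge(a\to c)$; $(a\vee b)\to c=(a\to c)\wedge(b\to c)$; $(a\to b)\wedge(b\to c)\le a\to c$; $a\leftarrow a=0$; $(a\vee b)\leftarrow c=(a\leftarrow c)\vee(b\leftarrow c)$; $a\leftarrow(b\wedge c)=(a\leftarrow b)\vee(a\leftarrow c)$; $a\leftarrow c\le(a\leftarrow b)\vee(b\leftarrow c)$; $a\wedge((a\to b)\leftarrow 0)\le b$; $a\le b\vee(1\to(a\leftarrow b))$. A tense algebra is $(\mathbf B,G,H)$ with $\mathbf B$ a Boolean algebra and unary $G,H$ such that, with $P(x)=\neg H(\neg x)$, $F(x)=\neg G(\neg x)$: $P(x)\le y\iff x\le G(y)$ and $F(x)\le y\iff x\le H(y)$. $M(\mathbf B,G,H)$ is the WHB-algebra on $B$ with $x\to y=G(\neg x\vee y)$, $x\leftarrow y=P(x\wedge\neg y)$. For a WHB-algebra $\mathbf A$: $X(\mathbf A)$ is its set of prime filters, $\sigma_{\mathbf A}(a)=\{P\colon a\in P\}$, $\tau_{\mathbf A}$ the topology with subbase $\{\sigma_{\mathbf A}(a)\}\cup\{X(\mathbf A)\setminus\sigma_{\mathbf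 A}(a)\}$; $(P,Q)\in R_{\mathbf A}$ iff for all $a,b$ ($a\to b\in P$, $a\in Q$ imply $b\in Q$); $(P,Q)\in S_{\mathbf A}$ iff for all $a,b$ ($a\in Q$, $b\notin Q$ imply $a\leftarrow b\in P$); $T(\mathbf A)$ is the Boolean algebra of $\tau_{\mathbf A}$-clopen subsets of $X(\mathbf A)$ with $G_{\mathbf A}(U)=\{P\colon R_{\mathbf A}(P)\subseteq U\}$, $H_{\mathbf A}(U)=\{P\colon S_{\mathbf A}(P)\subseteq U\}$. A variety $\mathcal N$ of tense algebras is a tense companion of a variety $\mathcal K$ of WHB-algebras if $T(\mathbf A)\in\mathcal N$ for all $\mathbf A\in\mathcal K$ and $M(\mathbf B)\in\mathcal N$... more precisely $M(\mathbf B)\in\mathcal K$ for all $\mathbf B\in\mathcal N$. A variety $\mathcal V$ has equationally definable principal congruences (EDPC) if there is a finite conjunction of equations $\zeta(x,y,u,v)$ in its language such that for every $\mathbf C\in\mathcal V$ and $a,b,c,d\in C$: $(c,d)$ belongs to the congruence of $\mathbf C$ generated by $(a,b)$ iff $\mathbf C\models\zeta[a,b,c,d]$. *)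

(* Defs.v *)
From Stdlib Require Import List.
Import ListNotations.
Set Implicit Arguments.

Record WStr := {
  wc :> Type;
  wmeet : wc -> wc -> wc;
  wjoin : wc -> wc -> wc;
  wimp  : wc -> wc -> wc;
  wcoimp : wc -> wc -> wc;
  wzero : wc;
  wone  : wc }.

Definition wle (A : WStr) (a b : A) : Prop := wmeet A a b = a.

Definition isWHB (A : WStr) : Prop :=
  let m := wmeet A in let j := wjoin A in
  let i := wimp A in let ci := wcoimp A in
  let z := wzero A in let o := wone A in
  (forall a b c, m a (m b c) = m (m a b) c) /\
  (forall a b c, j a (j b c) = j (j a b) c) /\
  (forall a b, m a b = m b a) /\
  (forall a b, j a b = j b a) /\
  (forall a b, m a (j a b) = a) /\
  (forall a b, j a (m a b) = a) /\
  (forall a b c, m a (j b c) = j (m a b) (m a c)) /\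
  (forall a, j a z = a) /\
  (forall a, m a o = a) /\
  (forall a, i a a = o) /\
  (forall a b c, i a (m b c) = m (i a b) (i a c)) /\
  (forall a b c, i (j a b) c = m (i a c) (i b c)) /\
  (forall a b c, wle A (m (i a b) (i b c)) (i a c)) /\
  (forall a, ci a a = z) /\
  (forall a b c, ci (j a b) c = j (ci a c) (ci b c)) /\
  (forall a b c, ci a (m b c) = j (ci a b) (ci a c)) /\
  (forall a b c, wle A (ci a c) (j (ci a b) (ci b c))) /\
  (forall a b, wle A (m a (ci (i a b) z)) b) /\
  (forall a b, wle A a (j b (i o (ci a b)))).

Record TStr := {
  tc :> Type;
  tmeet : tc -> tc -> tc;
  tjoin : tc -> tc -> tc;
  tneg  : tc -> tc;
  tzero : tc;
  tone  : tc;
  tG : tc -> tc;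
  tH : tc -> tc }.

Definition tle (B : TStr) (a b : B) : Prop := tmeet B a b = a.
Definition tP (B : TStr) (x : B) : B := tneg B (tH B (tneg B x)).
Definition tF (B : TStr) (x : B) : B := tneg B (tG B (tneg B x)).

Definition isBoolean (B : TStr) : Prop :=
  let m := tmeet B in let j := tjoin B in let n := tneg B in
  let z := tzero B in let o := tone B in
  (forall a b c, m a (m b c) = m (m a b) c) /\
  (forall a b c, j a (j b c) = j (j a b) c) /\
  (forall a b, m a b = m b a) /\
  (forall a b, j a b = j b a) /\
  (forall a b, m a (j a b) = a) /\
  (forall a b, j a (m a b) = a) /\
  (forall a b c, m a (j b c) = j (m a b) (m a c)) /\
  (forall a, j a z = a) /\
  (forall a, m a o = a) /\
  (forall a, m a (n a) = z) /\
  (forall a, j a (n a) = o).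

Definition isTense (B : TStr) : Prop :=
  isBoolean B /\
  (forall x y, tle B (tP B x) y <-> tle B x (tG B y)) /\
  (forall x y, tle B (tF B x) y <-> tle B x (tH B y)).

Inductive wterm : Type :=
| WVar : nat -> wterm
| WMeet : wterm -> wterm -> wterm
| WJoin : wterm -> wterm -> wterm
| WImp : wterm -> wterm -> wterm
| WCoimp : wterm -> wterm -> wterm
| WZero : wterm
| WOne : wterm.

Fixpoint weval (A : WStr) (v : nat -> A) (t : wterm) : A :=
  match t with
  | WVar n => v n
  | WMeet s u => wmeet A (weval A v s) (weval A v u)
  | WJoin s u => wjoin A (weval A v s) (weval A v u)
  | WImp s u => wimp A (weval A v s) (weval A v u)
  | WCoimp s u => wcoimp A (weval A v s) (weval A v u)
  | WZero => wzero A
  | WOne => wone A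
  end.

Inductive tterm : Type :=
| TVar : nat -> tterm
| TMeet : tterm -> tterm -> tterm
| TJoin : tterm -> tterm -> tterm
| TNeg : tterm -> tterm
| TZero : tterm
| TOne : tterm
| TGt : tterm -> tterm
| THt : tterm -> tterm.

Fixpoint teval (B : TStr) (v : nat -> B) (t : tterm) : B :=
  match t with
  | TVar n => v n
  | TMeet s u => tmeet B (teval B v s) (teval B v u)
  | TJoin s u => tjoin B (teval B v s) (teval B v u)
  | TNeg s => tneg B (teval B v s)
  | TZero => tzero B
  | TOne => tone B
  | TGt s => tG B (teval B v s)
  | THt s => tH B (teval B v s)
  end.

Definition wsat (A : WStr) (e : wterm * wterm) : Prop :=
  forall v : nat -> A, weval A v (fst e) = weval A v (snd e).
Definition tsat (B : TStr) (e : tterm * tterm) : Prop :=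
  forall v : nat -> B, teval B v (fst e) = teval B v (snd e).

Definition varietyW (K : WStr -> Prop) : Prop :=
  exists E : wterm * wterm -> Prop,
    forall A, K A <-> (isWHB A /\ forall e, E e -> wsat A e).
Definition varietyT (N : TStr -> Prop) : Prop :=
  exists E : tterm * tterm -> Prop,
    forall B, N B <-> (isTense B /\ forall e, E e -> tsat B e).

Definition equivR (X : Type) (r : X -> X -> Prop) : Prop :=
  (forall x, r x x) /\ (forall x y, r x y -> r y x) /\
  (forall x y z, r x y -> r y z -> r x z).

Definition congW (A : WStr) (r : A -> A -> Prop) : Prop :=
  equivR r /\
  (forall a b c d, r a b -> r c d -> r (wmeet A a c) (wmeet A b d)) /\
  (forall a b c d, r a b -> r c d -> r (wjoin A a c) (wjoin A b d)) /\
  (forall a b c d, r a b -> r c d -> r (wimp A a c) (wimp A b d)) /\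
  (forall a b c d, r a b -> r c d -> r (wcoimp A a c) (wcoimp A b d)).

Definition congT (B : TStr) (r : B -> B -> Prop) : Prop :=
  equivR r /\
  (forall a b c d, r a b -> r c d -> r (tmeet B a c) (tmeet B b d)) /\
  (forall a b c d, r a b -> r c d -> r (tjoin B a c) (tjoin B b d)) /\
  (forall a b, r a b -> r (tneg B a) (tneg B b)) /\
  (forall a b, r a b -> r (tG B a) (tG B b)) /\
  (forall a b, r a b -> r (tH B a) (tH B b)).

Definition CgW (A : WStr) (a b c d : A) : Prop :=
  forall r, congW A r -> r a b -> r c d.
Definition CgT (B : TStr) (a b c d : B) : Prop :=
  forall r, congT B r -> r a b -> r c d.

(* valuation x:=a, y:=b, u:=c, v:=d (variables 0,1,2,3; others read as v) *)
Definition val4 (X : Type) (a b c d : X) (n : nat) : X :=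
  match n with 0 => a | 1 => b | 2 => c | _ => d end.

Definition EDPC_W (K : WStr -> Prop) : Prop :=
  exists zeta : list (wterm * wterm),
    forall C, K C -> forall a b c d : C,
      CgW C a b c d <->
      Forall (fun e => weval C (val4 a b c d) (fst e) = weval C (val4 a b c d) (snd e)) zeta.

Definition EDPC_T (N : TStr -> Prop) : Prop :=
  exists zeta : list (tterm * tterm),
    forall C, N C -> forall a b c d : C,
      CgT C a b c d <->
      Forall (fun e => teval C (val4 a b c d) (fst e) = teval C (val4 a b c d) (snd e)) zeta.

Definition M (B : TStr) : WStr :=
  {| wc := B;
     wmeet := tmeet B; wjoin := tjoin B;
     wimp := fun x y => tG B (tjoin B (tneg B x) y);
     wcoimp := fun x y => tP B (tmeet B x (tneg B y));
     wzero := tzero B; wone := tone B |}.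

Definition primeFilter (A : WStr) (P : A -> Prop) : Prop :=
  P (wone A) /\
  (forall a b, P a -> wle A a b -> P b) /\
  (forall a b, P a -> P b -> P (wmeet A a b)) /\
  ~ P (wzero A) /\
  (forall a b, P (wjoin A a b) -> P a \/ P b).

Definition X (A : WStr) : Type := { P : A -> Prop | primeFilter A P }.

Definition sigma (A : WStr) (a : A) : X A -> Prop := fun P => proj1_sig P a.

Definition subbasic (A : WStr) (s : A * bool) : X A -> Prop :=
  fun P => if snd s then sigma (fst s) P else ~ sigma (fst s) P.

Definition tau_open (A : WStr) (U : X A -> Prop) : Prop :=
  forall P, U P -> exists l : list (A * bool),
    (forall s, In s l -> subbasic s P) /\
    (forall Q, (forall s, In s l -> subbasic s Q) -> U Q).

Definition clopen (A : WStr) (U : X A -> Prop) : Prop :=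
  tau_open U /\ tau_open (fun P => ~ U P).

Definition R_A (A : WStr) (P Q : X A) : Prop :=
  forall a b, proj1_sig P (wimp A a b) -> proj1_sig Q a -> proj1_sig Q b.
Definition S_A (A : WStr) (P Q : X A) : Prop :=
  forall a b, proj1_sig Q a -> ~ proj1_sig Q b -> proj1_sig P (wcoimp A a b).

Definition PT (A : WStr) : TStr :=
  {| tc := X A -> Prop;
     tmeet := fun U V P => U P /\ V P;
     tjoin := fun U V P => U P \/ V P;
     tneg := fun U P => ~ U P;
     tzero := fun _ => False;
     tone := fun _ => True;
     tG := fun U P => forall Q, R_A P Q -> U Q;
     tH := fun U P => forall Q, S_A P Q -> U Q |}.

Record closedT (B : TStr) (S : B -> Prop) : Prop := {
  cl_meet : forall x y, S x -> S y -> S (tmeet B x y);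
  cl_join : forall x y, S x -> S y -> S (tjoin B x y);
  cl_neg : forall x, S x -> S (tneg B x);
  cl_zero : S (tzero B);
  cl_one : S (tone B);
  cl_G : forall x, S x -> S (tG B x);
  cl_H : forall x, S x -> S (tH B x) }.

Definition subT (B : TStr) (S : B -> Prop) (h : closedT B S) : TStr :=
  {| tc := { x : B | S x };
     tmeet := fun x y => exist _ _ (cl_meet h _ _ (proj2_sig x) (proj2_sig y));
     tjoin := fun x y => exist _ _ (cl_join h _ _ (proj2_sig x) (proj2_sig y));
     tneg := fun x => exist _ _ (cl_neg h _ (proj2_sig x));
     tzero := exist _ _ (cl_zero h);
     tone := exist _ _ (cl_one h);
     tG := fun x => exist _ _ (cl_G h _ (proj2_sig x));
     tH := fun x => exist _ _ (cl_H h _ (proj2_sig x)) |}.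

(* "T(A) belongs to N": the clopens form a subalgebra of PT(A), and that
   subalgebra (which is T(A)) is in N *)
Definition T_in (N : TStr -> Prop) (A : WStr) : Prop :=
  exists h : closedT (PT A) (@clopen A), N (subT h).

Definition tense_companion (K : WStr -> Prop) (N : TStr -> Prop) : Prop :=
  (forall A, K A -> T_in N A) /\ (forall B, N B -> K (M B)).

(* Main.v *)
Require Import Defs.
From Stdlib Require Import List Classical ClassicalEpsilon FunctionalExtensionality PropExtensionality ProofIrrelevance Arith Lia.
From mathcomp Require classical_sets.
Import ListNotations.


Record LatAx {L : Type} (m j : L -> L -> L) (z o : L) : Prop := {
  lmA : forall a b c, m a (m b c) = m (m a b) c;
  ljA : forall a b c, j a (j b c) = j (j a b) c;
  lmC : forall a b, m a b = m b a;
  ljC : forall a b, j a b = j b a;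
  lmj : forall a b, m a (j a b) = a;
  ljm : forall a b, j a (m a b) = a;
  lmD : forall a b c, m a (j b c) = j (m a b) (m a c);
  lj0 : forall a, j a z = a;
  lm1 : forall a, m a o = a }.

Arguments lmA {L m j z o}. Arguments ljA {L m j z o}. Arguments lmC {L m j z o}. Arguments ljC {L m j z o}.
Arguments lmj {L m j z o}. Arguments ljm {L m j z o}. Arguments lmD {L m j z o}. Arguments lj0 {L m j z o}. Arguments lm1 {L m j z o}.

Definition le {L : Type} (m : L -> L -> L) (a b : L) : Prop := m a b = a.

Section Lat.
Context {L : Type} {m j : L -> L -> L} {z o : L} (H : LatAx m j z o).

Lemma mm a : m a a = a.
Proof. rewrite <- (ljm H a a) at 2. apply (lmj H). Qed.
Lemma jj a : j a a = a.
Proof. rewrite <- (lmj H a a) at 2. apply (ljm H). Qed.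
Lemma le_j a b : le m a b <-> j a b = b.
Proof. unfold le; split; intro E.
  - rewrite <- E. rewrite (ljC H). rewrite (lmC H). apply (ljm H).
  - rewrite <- E. apply (lmj H). Qed.
Lemma le_refl a : le m a a. Proof. apply mm. Qed.
Lemma le_trans a b c : le m a b -> le m b c -> le m a c.
Proof. unfold le; intros E1 E2. rewrite <- E1, <- (lmA H), E2. reflexivity. Qed.
Lemma le_antisym a b : le m a b -> le m b a -> a = b.
Proof. unfold le; intros E1 E2. rewrite <- E1, (lmC H). exact E2. Qed.
Lemma le_ml a b : le m (m a b) a.
Proof. unfold le. rewrite <- (lmA H), (lmC H b a), (lmA H), mm. reflexivity. Qed.
Lemma le_mr a b : le m (m a b) b.
Proof. unfold le. rewrite <- (lmA H), mm. reflexivity. Qed.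
Lemma le_jl a b : le m a (j a b).
Proof. apply (lmj H). Qed.
Lemma le_jr a b : le m b (j a b).
Proof. unfold le. rewrite (ljC H). apply (lmj H). Qed.
Lemma m_glb a b c : le m a b -> le m a c -> le m a (m b c).
Proof. unfold le; intros E1 E2. rewrite (lmA H), E1, E2. reflexivity. Qed.
Lemma j_lub a b c : le m a c -> le m b c -> le m (j a b) c.
Proof. intros E1 E2. apply le_j in E1. apply le_j in E2. apply le_j.
  rewrite <- (ljA H), E2, E1. reflexivity. Qed.
Lemma m0 a : m a z = z.
Proof. rewrite (lmC H). rewrite <- (lmj H z a) at 2. rewrite (ljC H), (lj0 H). reflexivity. Qed.
Lemma j1 a : j a o = o.
Proof. rewrite (ljC H). rewrite <- (ljm H o a) at 2. rewrite (lmC H), (lm1 H). reflexivity. Qed.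
Lemma le_0 a : le m z a.
Proof. unfold le. rewrite (lmC H). apply m0. Qed.
Lemma le_1 a : le m a o.
Proof. apply (lm1 H). Qed.
Lemma le0_eq a : le m a z -> a = z.
Proof. unfold le. intro E. rewrite <- E. apply m0. Qed.
Lemma le1_eq a : le m o a -> a = o.
Proof. intro E. apply le_antisym; auto. apply le_1. Qed.
Lemma jD a b c : j a (m b c) = m (j a b) (j a c).
Proof.
  rewrite (lmD H (j a b) a c).
  rewrite (lmC H (j a b) a), (lmj H).
  rewrite (lmC H (j a b) c), (lmD H c a b).
  rewrite (ljA H). rewrite (lmC H c a). rewrite (ljm H). rewrite (lmC H c b). reflexivity.
Qed.
Lemma lmDr a b c : m (j b c) a = j (m b a) (m c a).
Proof. rewrite (lmC H), (lmD H), (lmC H a b), (lmC H a c). reflexivity. Qed.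
Lemma m_mono a b c d : le m a b -> le m c d -> le m (m a c) (m b d).
Proof. intros. apply m_glb. apply (le_trans _ _ _ (le_ml a c)); auto.
  apply (le_trans _ _ _ (le_mr a c)); auto. Qed.
Lemma j_mono a b c d : le m a b -> le m c d -> le m (j a c) (j b d).
Proof. intros. apply j_lub. apply (le_trans _ _ _ H0). apply le_jl.
  apply (le_trans _ _ _ H1). apply le_jr. Qed.
End Lat.

Ltac latn k :=
  match k with
  | O => fail
  | S ?k' =>
  match goal with
  | Hl : LatAx ?M ?J ?Z ?O |- le ?M ?x ?y =>
    first
    [ apply (le_refl Hl)
    | assumption
    | apply (le_0 Hl)
    | apply (le_1 Hl)
    | apply (m_glb Hl); latn k
    | apply (j_lub Hl); latn k
    | eapply (le_trans Hl); [apply (le_ml Hl) | latn k']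
    | eapply (le_trans Hl); [apply (le_mr Hl) | latn k']
    | eapply (le_trans Hl); [ | apply (le_jl Hl)]; latn k'
    | eapply (le_trans Hl); [ | apply (le_jr Hl)]; latn k'
    | match goal with Hh : le M ?a y |- _ => eapply (le_trans Hl _ a y); [latn k' | exact Hh] end
    ]
  end end.
Ltac lat := latn 5.

Section BoolL.
Context {L : Type} {m j : L -> L -> L} {z o : L} {n : L -> L} (H : LatAx m j z o)
  (Hn1 : forall a, m a (n a) = z) (Hn2 : forall a, j a (n a) = o).

Lemma shunt a x b : le m (m a x) b <-> le m a (j (n x) b).
Proof. split; intro E.
  - assert (a = j (m a x) (m a (n x))) as ->.
    { rewrite <- (lmD H), Hn2, (lm1 H). reflexivity. }
    apply (j_lub H). eapply (le_trans H). exact E. apply (le_jr H). lat.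
  - eapply (le_trans H). apply (m_mono H). exact E. apply (le_refl H).
    rewrite (lmDr H). rewrite (lmC H (n x) x), Hn1. apply (j_lub H). apply (le_0 H). lat.
Qed.
Lemma mp x y : le m (m (j (n x) y) x) y.
Proof. apply shunt. apply (le_refl H). Qed.
Lemma compl_unique a x : m a x = z -> j a x = o -> x = n a.
Proof. intros E1 E2.
  transitivity (m x (n a)).
  - rewrite <- (lm1 H x) at 1. rewrite <- (Hn2 a), (lmD H), (lmC H x a), E1, (ljC H), (lj0 H). reflexivity.
  - transitivity (m (n a) (j a x)).
    + rewrite (lmD H), (lmC H (n a) a), Hn1, (ljC H z), (lj0 H), (lmC H). reflexivity.
    + rewrite E2, (lm1 H). reflexivity.
Qed.
Lemma nn a : n (n a) = a.
Proof. symmetry. apply compl_unique. rewrite (lmC H). apply Hn1. rewrite (ljC H). apply Hn2. Qed.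
Lemma n_inj a b : n a = n b -> a = b.
Proof. intro E. rewrite <- (nn a), E, nn. reflexivity. Qed.
Lemma nm a b : n (m a b) = j (n a) (n b).
Proof. symmetry. apply compl_unique.
  - apply (le0_eq H). rewrite (lmD H). apply (j_lub H).
    + rewrite <- (Hn1 a). lat.
    + rewrite <- (Hn1 b). lat.
  - apply (le1_eq H). rewrite (ljC H), (jD H).
    apply (m_glb H).
    + rewrite <- (Hn2 a), (ljC H a). lat.
    + rewrite <- (Hn2 b), (ljC H b). lat.
Qed.
Lemma nj a b : n (j a b) = m (n a) (n b).
Proof. apply n_inj. rewrite nn, nm, !nn. reflexivity. Qed.
Lemma n0 : n z = o.
Proof. symmetry. apply compl_unique. apply (lm1 H). apply (j1 H). Qed.
Lemma n1 : n o = z.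
Proof. apply n_inj. rewrite n0, nn. reflexivity. Qed.
Lemma n_le a b : le m a b -> le m (n b) (n a).
Proof. intro E. apply (le_j H). rewrite <- nm. rewrite (lmC H). unfold le in E. rewrite E. reflexivity. Qed.
Lemma shunt2 a x b : le m (m a (n x)) b <-> le m a (j x b).
Proof. rewrite shunt, nn. tauto. Qed.

Definition bi x y := m (j (n x) y) (j (n y) x).
Lemma bi_refl x : bi x x = o.
Proof. unfold bi. rewrite (ljC H (n x)), Hn2. apply (lm1 H). Qed.
Lemma bi_sym x y : bi x y = bi y x.
Proof. unfold bi. apply (lmC H). Qed.
Lemma bi_le1 x y : le m (bi x y) (j (n x) y).
Proof. unfold bi. lat. Qed.
Lemma bi_le2 x y : le m (bi x y) (j (n y) x).
Proof. unfold bi. lat. Qed.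
Lemma le_bi u c d : le m u (bi c d) <-> le m (m c u) d /\ le m (m d u) c.
Proof. unfold bi. rewrite (lmC H c u), (lmC H d u), !shunt. split.
  - intro E. split; eapply (le_trans H); try exact E; lat.
  - intros [E1 E2]. lat.
Qed.
Lemma bi_trans x y w : le m (m (bi x y) (bi y w)) (bi x w).
Proof. apply le_bi. pose proof (mp x y). pose proof (mp y w). pose proof (mp w y). pose proof (mp y x).
  pose proof (bi_le1 x y). pose proof (bi_le2 x y). pose proof (bi_le1 y w). pose proof (bi_le2 y w).
  split.
  - apply (le_trans H _ (m (m (j (n y) w) y) (m (m (j (n x) y) x) (m (bi x y) (bi y w)) ))).
    + apply (m_glb H). apply (m_glb H). lat. eapply (le_trans H); [|exact H0]. lat. lat.
    + lat.
  - apply (le_trans H _ (m (m (j (n y) x) y) (m (m (j (n w) y) w) (m (bi x y) (bi y w)) ))).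
    + apply (m_glb H). apply (m_glb H). lat. eapply (le_trans H); [|exact H2]. lat. lat.
    + lat.
Qed.
Lemma bi_m a b c d : le m (m (bi a b) (bi c d)) (bi (m a c) (m b d)).
Proof. apply le_bi. pose proof (mp a b). pose proof (mp b a). pose proof (mp c d). pose proof (mp d c).
  pose proof (bi_le1 a b). pose proof (bi_le2 a b). pose proof (bi_le1 c d). pose proof (bi_le2 c d).
  split; apply (m_glb H).
  - eapply (le_trans H); [|exact H0]. apply (m_glb H). lat. lat.
  - eapply (le_trans H); [|exact H2]. apply (m_glb H). lat. lat.
  - eapply (le_trans H); [|exact H1]. apply (m_glb H). lat. lat.
  - eapply (le_trans H); [|exact H3]. apply (m_glb H). lat. lat.
Qed.
Lemma bi_j a b c d : le m (m (bi a b) (bi c d)) (bi (j a c) (j b d)).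
Proof. apply le_bi. pose proof (mp a b). pose proof (mp b a). pose proof (mp c d). pose proof (mp d c).
  pose proof (bi_le1 a b). pose proof (bi_le2 a b). pose proof (bi_le1 c d). pose proof (bi_le2 c d).
  split; rewrite (lmDr H); apply (j_lub H).
  - eapply (le_trans H); [|apply (le_jl H)]. eapply (le_trans H); [|exact H0]. apply (m_glb H); lat.
  - eapply (le_trans H); [|apply (le_jr H)]. eapply (le_trans H); [|exact H2]. apply (m_glb H); lat.
  - eapply (le_trans H); [|apply (le_jl H)]. eapply (le_trans H); [|exact H1]. apply (m_glb H); lat.
  - eapply (le_trans H); [|apply (le_jr H)]. eapply (le_trans H); [|exact H3]. apply (m_glb H); lat.
Qed.
Lemma bi_n a b : bi (n a) (n b) = bi a b.
Proof. unfold bi. rewrite !nn. rewrite (lmC H), (ljC H a), (ljC H b). reflexivity. Qed.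
Lemma bi_o y : bi y o = y.
Proof. unfold bi. rewrite n1, (j1 H), (ljC H z), (lj0 H), (lmC H), (lm1 H). reflexivity. Qed.
Lemma m_bi c d : m c (bi c d) = m c d.
Proof. apply (le_antisym H).
  - pose proof (mp c d). pose proof (bi_le1 c d). apply (m_glb H). lat.
    eapply (le_trans H); [|exact H0]. lat.
  - apply (m_glb H). lat. unfold bi. apply (m_glb H). lat. lat.
Qed.
Lemma cond_step p X Y C q :
  (le m (m (m p X) C) q /\ le m (m p C) (j q Y)) <-> le m (m p (m (j X (n Y)) C)) q.
Proof.
  assert (E : m p (m (j X (n Y)) C) = j (m (m p C) X) (m (m p C) (n Y))).
  { rewrite (lmC H (j X (n Y)) C), (lmA H), (lmD H). reflexivity. }
  rewrite E. rewrite (ljC H q Y), <- shunt2. split.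
  - intros [E1 E2]. apply (j_lub H); auto.
    eapply (le_trans H); [|exact E1]. lat.
  - intro E3. split; eapply (le_trans H); try exact E3.
    + apply (le_trans H _ (m (m p C) X)). lat. apply (le_jl H).
    + apply (le_jr H).
Qed.
End BoolL.


Lemma bool_lat (B : TStr) : isBoolean B -> LatAx (tmeet B) (tjoin B) (tzero B) (tone B).
Proof. intros (h1&h2&h3&h4&h5&h6&h7&h8&h9&h10&h11). constructor; auto. Qed.
Lemma bool_n1 (B : TStr) : isBoolean B -> forall a, tmeet B a (tneg B a) = tzero B.
Proof. intros (h1&h2&h3&h4&h5&h6&h7&h8&h9&h10&h11). auto. Qed.
Lemma bool_n2 (B : TStr) : isBoolean B -> forall a, tjoin B a (tneg B a) = tone B.
Proof. intros (h1&h2&h3&h4&h5&h6&h7&h8&h9&h10&h11). auto. Qed.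

Definition mstep (B : TStr) (x : B) : B := tmeet B x (tmeet B (tG B x) (tH B x)).
Fixpoint miter (B : TStr) (k : nat) (x : B) : B :=
  match k with O => x | S k => mstep B (miter B k x) end.
Definition biT (B : TStr) (x y : B) : B := @bi _ (tmeet B) (tjoin B) (tneg B) x y.

Section Tense.
Context (B : TStr) (HT : isTense B).
Let HB := proj1 HT.
Let Hl := bool_lat B HB.
Let Hn1 := bool_n1 B HB.
Let Hn2 := bool_n2 B HB.
Local Notation m := (tmeet B).
Local Notation jn := (tjoin B).
Local Notation n := (tneg B).
Local Notation G := (tG B).
Local Notation H := (tH B).

Lemma adjG x y : le m (tP B x) y <-> le m x (G y).
Proof. apply (proj1 (proj2 HT)). Qed.
Lemma adjH x y : le m (tF B x) y <-> le m x (H y).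
Proof. apply (proj2 (proj2 HT)). Qed.
Lemma G_mono x y : le m x y -> le m (G x) (G y).
Proof. intro E. apply adjG. eapply (le_trans Hl); [|exact E]. apply adjG. apply (le_refl Hl). Qed.
Lemma H_mono x y : le m x y -> le m (H x) (H y).
Proof. intro E. apply adjH. eapply (le_trans Hl); [|exact E]. apply adjH. apply (le_refl Hl). Qed.
Lemma P_mono x y : le m x y -> le m (tP B x) (tP B y).
Proof. intro E. unfold tP. apply (n_le Hl Hn1 Hn2). apply H_mono. apply (n_le Hl Hn1 Hn2). exact E. Qed.
Lemma F_mono x y : le m x y -> le m (tF B x) (tF B y).
Proof. intro E. unfold tF. apply (n_le Hl Hn1 Hn2). apply G_mono. apply (n_le Hl Hn1 Hn2). exact E. Qed.
Lemma G_m x y : G (m x y) = m (G x) (G y).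
Proof. apply (le_antisym Hl).
  - apply (m_glb Hl); apply G_mono; lat.
  - apply adjG. apply (m_glb Hl).
    + eapply (le_trans Hl). apply P_mono. apply (le_ml Hl). apply adjG. apply (le_refl Hl).
    + eapply (le_trans Hl). apply P_mono. apply (le_mr Hl). apply adjG. apply (le_refl Hl).
Qed.
Lemma H_m x y : H (m x y) = m (H x) (H y).
Proof. apply (le_antisym Hl).
  - apply (m_glb Hl); apply H_mono; lat.
  - apply adjH. apply (m_glb Hl).
    + eapply (le_trans Hl). apply F_mono. apply (le_ml Hl). apply adjH. apply (le_refl Hl).
    + eapply (le_trans Hl). apply F_mono. apply (le_mr Hl). apply adjH. apply (le_refl Hl).
Qed.
Lemma G_1 : G (tone B) = tone B.
Proof. apply (le1_eq Hl). apply adjG. apply (le_1 Hl). Qed.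
Lemma H_1 : H (tone B) = tone B.
Proof. apply (le1_eq Hl). apply adjH. apply (le_1 Hl). Qed.

Lemma bi_G x y : le m (G (biT B x y)) (biT B (G x) (G y)).
Proof. apply (le_bi Hl Hn1 Hn2). split; rewrite (lmC Hl), <- G_m; apply G_mono;
  apply (proj2 (shunt Hl Hn1 Hn2 _ _ _)). apply (bi_le1 Hl). apply (bi_le2 Hl).
Qed.
Lemma bi_H x y : le m (H (biT B x y)) (biT B (H x) (H y)).
Proof. apply (le_bi Hl Hn1 Hn2). split; rewrite (lmC Hl), <- H_m; apply H_mono;
  apply (proj2 (shunt Hl Hn1 Hn2 _ _ _)). apply (bi_le1 Hl). apply (bi_le2 Hl).
Qed.

Lemma mstep_le x : le m (mstep B x) x.
Proof. unfold mstep. lat. Qed.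
Lemma mstep_mono x y : le m x y -> le m (mstep B x) (mstep B y).
Proof. intro E. unfold mstep. pose proof (G_mono _ _ E). pose proof (H_mono _ _ E). lat. Qed.
Lemma miter_mono k x y : le m x y -> le m (miter B k x) (miter B k y).
Proof. induction k; simpl; auto. intro E. apply mstep_mono. auto. Qed.
Lemma miter_anti k k' x : k <= k' -> le m (miter B k' x) (miter B k x).
Proof. induction 1. apply (le_refl Hl). simpl. eapply (le_trans Hl). apply mstep_le. auto. Qed.
Lemma miter_one k : miter B k (tone B) = tone B.
Proof. induction k; simpl; auto. rewrite IHk. unfold mstep. rewrite G_1, H_1, !(lm1 Hl). reflexivity. Qed.
Lemma miter_add k j x : miter B (k + j) x = miter B k (miter B j x).
Proof. induction k; simpl; auto. rewrite IHk. reflexivity. Qed.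

Definition thetaT (u x y : B) : Prop := exists k, le m (miter B k u) (biT B x y).

Lemma thetaT_cong u : congT B (thetaT u).
Proof.
  assert (MX : forall k1 k2 x, le m (miter B (max k1 k2) x) (miter B k1 x) /\ le m (miter B (max k1 k2) x) (miter B k2 x)).
  { intros; split; apply miter_anti; lia. }
  split; [split; [|split]|split;[|split;[|split;[|split]]]].
  - intro x. exists 0. unfold biT. rewrite (bi_refl Hl Hn2). apply (le_1 Hl).
  - intros x y [k E]. exists k. unfold biT in *. rewrite (bi_sym Hl). exact E.
  - intros x y w [k1 E1] [k2 E2]. exists (max k1 k2). pose proof (MX k1 k2 u) as MX.
    eapply (le_trans Hl); [|apply (bi_trans Hl Hn1 Hn2 x y w)]. destruct MX as [M1 M2]; apply (m_glb Hl); [eapply (le_trans Hl); [apply M1|exact E1] | eapply (le_trans Hl); [apply M2|exact E2]].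
  - intros a b c d [k1 E1] [k2 E2]. exists (max k1 k2). pose proof (MX k1 k2 u) as MX.
    eapply (le_trans Hl); [|apply (bi_m Hl Hn1 Hn2)]. destruct MX as [M1 M2]; apply (m_glb Hl); [eapply (le_trans Hl); [apply M1|exact E1] | eapply (le_trans Hl); [apply M2|exact E2]].
  - intros a b c d [k1 E1] [k2 E2]. exists (max k1 k2). pose proof (MX k1 k2 u) as MX.
    eapply (le_trans Hl); [|apply (bi_j Hl Hn1 Hn2)]. destruct MX as [M1 M2]; apply (m_glb Hl); [eapply (le_trans Hl); [apply M1|exact E1] | eapply (le_trans Hl); [apply M2|exact E2]].
  - intros a b [k E]. exists k. unfold biT in *. rewrite (bi_n Hl Hn1 Hn2). exact E.
  - intros a b [k E]. exists (S k). simpl. eapply (le_trans Hl); [|apply bi_G].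
    eapply (le_trans Hl); [|apply G_mono; exact E]. unfold mstep. lat.
  - intros a b [k E]. exists (S k). simpl. eapply (le_trans Hl); [|apply bi_H].
    eapply (le_trans Hl); [|apply H_mono; exact E]. unfold mstep. lat.
Qed.

Lemma CgT_char a b c d : CgT B a b c d <-> thetaT (biT B a b) c d.
Proof. split.
  - intro C. apply C. apply thetaT_cong. exists 0. apply (le_refl Hl).
  - intros [k E] r [[Rr [Rs Rt]] [Rm [Rj [Rn [RG RH]]]]] Rab.
    assert (R1 : forall x y, r x y -> r (biT B x y) (tone B)).
    { intros x y Rxy. rewrite <- (bi_refl Hl Hn2 y). unfold biT, bi.
      apply Rm; apply Rj; auto. }
    assert (R2 : forall k0 x, r x (tone B) -> r (miter B k0 x) (tone B)).
    { intros k0 x Rx. induction k0 as [|k0 IH]; simpl. exact Rx.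
      unfold mstep. assert (E1 : tone B = m (tone B) (m (G (tone B)) (H (tone B))))
        by (rewrite G_1, H_1, !(lm1 Hl); reflexivity).
      rewrite E1. apply Rm; [exact IH| apply Rm; [apply RG|apply RH]; exact IH]. }
    assert (R3 : r (biT B c d) (tone B)).
    { pose proof (R2 k _ (R1 _ _ Rab)) as Q.
      apply (le_j Hl) in E.
      assert (Q2 : r (jn (miter B k (biT B a b)) (biT B c d)) (jn (tone B) (biT B c d))) by (apply Rj; auto).
      rewrite E, (ljC Hl), (j1 Hl) in Q2. exact Q2. }
    assert (R4 : r c (m c d)).
    { rewrite <- (m_bi Hl Hn1 Hn2 c d). rewrite <- (lm1 Hl c) at 1. apply Rm; [apply Rr|apply Rs; exact R3]. }
    assert (R5 : r d (m c d)).
    { rewrite (lmC Hl c d). rewrite <- (m_bi Hl Hn1 Hn2 d c). rewrite <- (lm1 Hl d) at 1. apply Rm; [apply Rr|apply Rs].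
      unfold biT in R3. rewrite (bi_sym Hl). exact R3. }
    eauto.
Qed.
End Tense.


Definition prodT (Bs : nat -> TStr) : TStr :=
  {| tc := forall i, Bs i;
     tmeet := fun x y i => tmeet (Bs i) (x i) (y i);
     tjoin := fun x y i => tjoin (Bs i) (x i) (y i);
     tneg := fun x i => tneg (Bs i) (x i);
     tzero := fun i => tzero (Bs i);
     tone := fun i => tone (Bs i);
     tG := fun x i => tG (Bs i) (x i);
     tH := fun x i => tH (Bs i) (x i) |}.

Lemma teval_prod Bs (v : nat -> prodT Bs) t :
  teval (prodT Bs) v t = fun i => teval (Bs i) (fun k => v k i) t.
Proof. induction t; simpl; try rewrite IHt1, IHt2; try rewrite IHt; reflexivity. Qed.

Lemma tle_prod Bs (x y : prodT Bs) : tle (prodT Bs) x y <-> forall i, tle (Bs i) (x i) (y i).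
Proof. unfold tle; simpl. split.
  - intros E i. exact (equal_f_dep E i).
  - intro E. apply functional_extensionality_dep. exact E. Qed.

Lemma prod_tense Bs : (forall i, isTense (Bs i)) -> isTense (prodT Bs).
Proof. intro HT.
  assert (HB : forall i, isBoolean (Bs i)) by (intro i; apply HT).
  split; [|split].
  - repeat split; intros; apply functional_extensionality_dep; intro i;
      destruct (HB i) as (h1&h2&h3&h4&h5&h6&h7&h8&h9&h10&h11); simpl; auto.
  - intros x y. rewrite !tle_prod. split; intros E i; apply (proj1 (proj2 (HT i))); apply E.
  - intros x y. rewrite !tle_prod. split; intros E i; apply (proj2 (proj2 (HT i))); apply E.
Qed.

Lemma varT_tense N : varietyT N -> forall B, N B -> isTense B.
Proof. intros [E HE] B NB. apply HE in NB. apply NB. Qed.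

Lemma varT_prod N : varietyT N -> forall Bs, (forall i, N (Bs i)) -> N (prodT Bs).
Proof. intros [E HE] Bs HN. apply HE. split.
  - apply prod_tense. intro i. apply (HE (Bs i)). apply HN.
  - intros e He v. rewrite !teval_prod. apply functional_extensionality_dep. intro i.
    apply (proj2 (proj1 (HE (Bs i)) (HN i)) e He).
Qed.

Lemma miter_prod Bs k (x : prodT Bs) : miter (prodT Bs) k x = fun i => miter (Bs i) k (x i).
Proof. induction k; simpl. reflexivity. rewrite IHk. reflexivity. Qed.

Lemma val4_prod Bs (a b c d : prodT Bs) i :
  (fun k => val4 a b c d k i) = val4 (a i) (b i) (c i) (d i).
Proof. apply functional_extensionality. intros [|[|[|k]]]; reflexivity. Qed.

Lemma biT_o B (HT : isTense B) (y : B) : biT B y (tone B) = y.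
Proof. apply (bi_o (bool_lat B (proj1 HT)) (bool_n1 B (proj1 HT)) (bool_n2 B (proj1 HT))). Qed.

Lemma uniform N : varietyT N -> EDPC_T N ->
  exists n, forall B, N B -> forall x : B, le (tmeet B) (miter B n x) (miter B (S n) x).
Proof.
  intros HV [zeta Hz]. apply NNPP; intro Hno.
  assert (Hf : forall n, exists p : {B : TStr & tc B}, N (projT1 p) /\
     ~ le (tmeet _) (miter _ n (projT2 p)) (miter _ (S n) (projT2 p))).
  { intro n. apply NNPP; intro C. apply Hno. exists n. intros B NB x. apply NNPP; intro D.
    apply C. exists (existT _ B x). auto. }
  set (f := fun n => proj1_sig (constructive_indefinite_description _ (Hf n))).
  assert (Pf : forall n, N (projT1 (f n)) /\
     ~ le (tmeet _) (miter _ n (projT2 (f n))) (miter _ (S n) (projT2 (f n)))).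
  { intro n. exact (proj2_sig (constructive_indefinite_description _ (Hf n))). }
  set (Bs := fun n => projT1 (f n)).
  set (xs := (fun n => projT2 (f n)) : prodT Bs).
  set (c := (fun i => miter (Bs i) (S i) (xs i)) : prodT Bs).
  assert (NP : N (prodT Bs)) by (apply (varT_prod N HV); intro i; apply Pf).
  assert (TP : isTense (prodT Bs)) by (apply (varT_tense N HV); exact NP).
  assert (Cg : CgT (prodT Bs) xs (tone _) c (tone _)).
  { apply (Hz _ NP). apply Forall_forall. intros e He.
    rewrite !teval_prod. apply functional_extensionality_dep. intro i.
    rewrite val4_prod.
    assert (Ti : isTense (Bs i)) by (apply (varT_tense N HV); apply Pf).
    assert (Ci : CgT (Bs i) (xs i) (tone _) (c i) (tone _)).
    { apply (CgT_char _ Ti). exists (S i). rewrite !(biT_o _ Ti). apply (le_refl (bool_lat _ (proj1 Ti))). }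
    apply (Hz _ (proj1 (Pf i))) in Ci. rewrite Forall_forall in Ci. apply Ci. exact He. }
  apply (CgT_char _ TP) in Cg. destruct Cg as [k E].
  rewrite !(biT_o _ TP) in E. rewrite miter_prod in E.
  apply (proj2 (Pf k)). change (tle (prodT Bs) (fun i : nat => miter (Bs i) k (xs i)) c) in E. exact (proj1 (tle_prod Bs _ _) E k).
Qed.


Lemma my_zorn (T : Type) (P : (T -> Prop) -> Prop) :
  (forall F : (T -> Prop) -> Prop, (forall X, F X -> P X) ->
     (forall X Y, F X -> F Y -> (forall t, X t -> Y t) \/ (forall t, Y t -> X t)) ->
     P (fun t => exists2 X, F X & X t)) ->
  exists A, P A /\ forall B, (forall t, A t -> B t) -> P B -> forall t, B t -> A t.
Proof.
  intros H.
  destruct (@classical_sets.Zorn_bigcup T P) as [A [PA HA]].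
  - intros F HF Htot. apply H. exact HF.
    intros X Y FX FY. destruct (Htot X Y FX FY); auto.
  - exists A; split; auto. intros Bs HAB PB t Bt.
    apply NNPP; intro nA. apply (HA Bs); auto.
    split. exact HAB. intro C. apply nA. apply C. exact Bt.
Qed.

Lemma whb_lat (A : WStr) : isWHB A -> LatAx (wmeet A) (wjoin A) (wzero A) (wone A).
Proof. intros (h1&h2&h3&h4&h5&h6&h7&h8&h9&_). constructor; auto. Qed.

Section WHB.
Context (A : WStr) (HW : isWHB A).
Let Hl := whb_lat A HW.
Local Notation m := (wmeet A).
Local Notation j := (wjoin A).
Local Notation i := (wimp A).
Local Notation ci := (wcoimp A).
Local Notation o := (wone A).
Local Notation z := (wzero A).

Lemma i_refl a : i a a = o. Proof. apply HW. Qed.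
Lemma i_mD a b c : i a (m b c) = m (i a b) (i a c). Proof. apply HW. Qed.
Lemma i_jD a b c : i (j a b) c = m (i a c) (i b c). Proof. apply HW. Qed.
Lemma i_trans a b c : le m (m (i a b) (i b c)) (i a c). Proof. apply HW. Qed.
Lemma ci_refl a : ci a a = z. Proof. apply HW. Qed.
Lemma ci_jD a b c : ci (j a b) c = j (ci a c) (ci b c). Proof. apply HW. Qed.
Lemma ci_mD a b c : ci a (m b c) = j (ci a b) (ci a c). Proof. apply HW. Qed.
Lemma ci_trans a b c : le m (ci a c) (j (ci a b) (ci b c)). Proof. apply HW. Qed.

Lemma i_mono2 x y y' : le m y y' -> le m (i x y) (i x y').
Proof. intro E. unfold le in *. rewrite <- i_mD, E. reflexivity. Qed.
Lemma i_anti1 x x' y : le m x' x -> le m (i x y) (i x' y).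
Proof. intro E. apply (le_j Hl) in E. unfold le. rewrite <- E at 2. rewrite i_jD. apply (lmC Hl). Qed.
Lemma i_meet_l x y : i (m x y) y = o.
Proof. assert (E : j (m x y) y = y).
  { apply (le_j Hl). apply (le_mr Hl). }
  pose proof (i_jD (m x y) y y) as Q. rewrite E, i_refl, (lm1 Hl) in Q. symmetry. exact Q. Qed.
Lemma ci_mono1 a a' b : le m a a' -> le m (ci a b) (ci a' b).
Proof. intro E. apply (le_j Hl) in E. apply (le_j Hl). rewrite <- ci_jD, E. reflexivity. Qed.
Lemma ci_anti2 x y y' : le m y y' -> le m (ci x y') (ci x y).
Proof. intro E. apply (le_j Hl). unfold le in E. rewrite <- E at 2. rewrite ci_mD. apply (ljC Hl). Qed.

Lemma pf_up (P : A -> Prop) : primeFilter A P -> forall a b, P a -> le m a b -> P b.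
Proof. intros HP. apply HP. Qed.
Lemma pf_meet (P : A -> Prop) : primeFilter A P -> forall a b, P a -> P b -> P (m a b).
Proof. intros HP. apply HP. Qed.
Lemma pf_one (P : A -> Prop) : primeFilter A P -> P o.
Proof. intros HP. apply HP. Qed.
Lemma pf_zero (P : A -> Prop) : primeFilter A P -> ~ P z.
Proof. intros HP. apply HP. Qed.
Lemma pf_prime (P : A -> Prop) : primeFilter A P -> forall a b, P (j a b) -> P a \/ P b.
Proof. intros HP. apply HP. Qed.

Section Sep.
Variable bad : A -> A -> Prop.
Hypothesis Bmono : forall x y x' y', bad x y -> le m x' x -> le m y y' -> bad x' y'.
Hypothesis Brefl : forall x, bad x x.
Hypothesis Bcut : forall x y w, bad (m x w) y -> bad x (j y w) -> bad x y.

Definition goodS (a b : A) (S : A + A -> Prop) : Prop :=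
  S (inl a) /\ S (inr b) /\
  (forall x y, S (inl x) -> le m x y -> S (inl y)) /\
  (forall x y, S (inl x) -> S (inl y) -> S (inl (m x y))) /\
  (forall x y, S (inr y) -> le m x y -> S (inr x)) /\
  (forall x y, S (inr x) -> S (inr y) -> S (inr (j x y))) /\
  (forall x y, S (inl x) -> S (inr y) -> ~ bad x y).

Lemma separation a b : ~ bad a b ->
  exists Q : A -> Prop, primeFilter A Q /\ Q a /\ ~ Q b /\ (forall x y, Q x -> ~ Q y -> ~ bad x y).
Proof.
  intro nab.
  set (Pz := fun S : A + A -> Prop => (forall t, ~ S t) \/ goodS a b S).
  destruct (my_zorn (A + A) Pz) as [A0 [PA0 MA0]].
  - intros F HF Htot.
    destruct (classic (exists X t, F X /\ X t)) as [[X0 [t0 [FX0 X0t]]]|Hn].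
    2:{ left. intros t [X FX Xt]. apply Hn. exists X, t. auto. }
    right.
    assert (Gd : forall X t, F X -> X t -> goodS a b X).
    { intros X t FX Xt. destruct (HF X FX) as [E|E]; auto. exfalso. exact (E t Xt). }
    assert (G0 := Gd _ _ FX0 X0t).
    assert (Two : forall X Y t1 t2, F X -> F Y -> X t1 -> Y t2 -> exists W, F W /\ W t1 /\ W t2).
    { intros X Y t1 t2 FX FY X1 Y2. destruct (Htot X Y FX FY) as [S|S].
      - exists Y. auto.
      - exists X. auto. }
    repeat split.
    + exists X0; auto. apply G0.
    + exists X0; auto. apply G0.
    + intros x y [X FX Xx] E. exists X; auto. eapply (Gd X _ FX Xx); eauto.
    + intros x y [X FX Xx] [Y FY Yy]. destruct (Two X Y _ _ FX FY Xx Yy) as [W [FW [W1 W2]]].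
      exists W; auto. apply (Gd W _ FW W1); auto.
    + intros x y [X FX Xx] E. exists X; auto. eapply (Gd X _ FX Xx); eauto.
    + intros x y [X FX Xx] [Y FY Yy]. destruct (Two X Y _ _ FX FY Xx Yy) as [W [FW [W1 W2]]].
      exists W; auto. apply (Gd W _ FW W1); auto.
    + intros x y [X FX Xx] [Y FY Yy]. destruct (Two X Y _ _ FX FY Xx Yy) as [W [FW [W1 W2]]].
      apply (Gd W _ FW W1); auto.
  - set (S0 := fun t : A + A => match t with inl x => le m a x | inr y => le m y b end).
    assert (GS0 : goodS a b S0).
    { unfold S0; repeat split.
      - apply (le_refl Hl).
      - apply (le_refl Hl).
      - intros x y E1 E2. eapply (le_trans Hl); eauto.
      - intros x y E1 E2. apply (m_glb Hl); auto.
      - intros x y E1 E2. eapply (le_trans Hl); eauto.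
      - intros x y E1 E2. apply (j_lub Hl); auto.
      - intros x y E1 E2 Bxy. apply nab. eapply Bmono; eauto. }
    assert (GA0 : goodS a b A0).
    { destruct PA0 as [E|E]; auto. exfalso.
      assert (S0 (inl a)) by apply GS0.
      apply (E (inl a)). apply (MA0 S0); auto.
      - intros t Ht. exfalso. exact (E t Ht).
      - right. exact GS0. }
    destruct GA0 as (Ga & Gb & Gup & Gm & Gdn & Gj & Gbad).
    set (Q := fun x => A0 (inl x)). set (I := fun y => A0 (inr y)).
    assert (Part : forall w, Q w \/ I w).
    { intro w. apply NNPP. intro Hw. apply Hw.
      assert (nQ : ~ Q w) by (intro; apply Hw; auto).
      assert (nI : ~ I w) by (intro; apply Hw; auto).
      set (S1 := fun t : A + A => match t with inl x => exists q, Q q /\ le m (m q w) x | inr y => I y end).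
      set (S2 := fun t : A + A => match t with inl x => Q x | inr y => exists i, I i /\ le m y (j i w) end).
      assert (E1 : exists x y, S1 (inl x) /\ S1 (inr y) /\ bad x y).
      { apply NNPP. intro NE. exfalso. apply nQ.
        assert (GS1 : goodS a b S1).
        { unfold S1; repeat split.
          - exists a. split. exact Ga. apply (le_ml Hl).
          - exact Gb.
          - intros x y [q [Qq E]] E2. exists q. split; auto. eapply (le_trans Hl); eauto.
          - intros x y [q [Qq E]] [q' [Qq' E']]. exists (m q q'). split. apply Gm; auto.
            apply (m_glb Hl). eapply (le_trans Hl); [|exact E]. lat. eapply (le_trans Hl); [|exact E']. lat.
          - intros x y F1 F2. eapply Gdn; eauto.
          - intros x y F1 F2. apply Gj; auto.
          - intros x y Sx Sy Bxy. apply NE. exists x, y. auto. }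
        apply (MA0 S1).
        - intros [x|y] Ht; simpl. exists x. split; auto. apply (le_ml Hl). exact Ht.
        - right. exact GS1.
        - simpl. exists a. split. exact Ga. apply (le_mr Hl). }
      assert (E2 : exists x y, S2 (inl x) /\ S2 (inr y) /\ bad x y).
      { apply NNPP. intro NE. exfalso. apply nI.
        assert (GS2 : goodS a b S2).
        { unfold S2; repeat split.
          - exact Ga.
          - exists b. split. exact Gb. apply (le_jl Hl).
          - intros x y F1 F2. eapply Gup; eauto.
          - intros x y F1 F2. apply Gm; auto.
          - intros x y [q [Qq E]] E2. exists q. split; auto. eapply (le_trans Hl); eauto.
          - intros x y [q [Qq E]] [q' [Qq' E']]. exists (j q q'). split. apply Gj; auto.
            apply (j_lub Hl). eapply (le_trans Hl); [exact E|]. lat. eapply (le_trans Hl); [exact E'|]. lat.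
          - intros x y Sx Sy Bxy. apply NE. exists x, y. auto. }
        apply (MA0 S2).
        - intros [x|y] Ht; simpl. exact Ht. exists y. split; auto. apply (le_jl Hl).
        - right. exact GS2.
        - simpl. exists b. split. exact Gb. apply (le_jr Hl). }
      destruct E1 as [x1 [y1 [[q [Qq Eq]] [Iy1 B1]]]].
      destruct E2 as [x2 [y2 [Qx2 [[i0 [Ii Ei]] B2]]]].
      exfalso. apply (Gbad (m q x2) (j y1 i0)).
      - apply Gm; auto.
      - apply Gj; auto.
      - apply (Bcut _ _ w).
        + eapply Bmono. exact B1. eapply (le_trans Hl); [|exact Eq]. lat. lat.
        + eapply Bmono. exact B2. lat. eapply (le_trans Hl); [exact Ei|]. lat. }
    assert (nQI : forall w, Q w -> I w -> False).
    { intros w Qw Iw. exact (Gbad w w Qw Iw (Brefl w)). }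
    exists Q. split; [|split; [|split]].
    + repeat split.
      * apply (Gup a). exact Ga. apply (le_1 Hl).
      * intros x y Qx E. apply (Gup x); auto.
      * intros x y Qx Qy. apply Gm; auto.
      * intro Qz. apply (nQI z Qz). apply (Gdn z b). exact Gb. apply (le_0 Hl).
      * intros x y Qxy. destruct (Part x) as [|Ix]; auto. destruct (Part y) as [|Iy]; auto.
        exfalso. apply (nQI _ Qxy). apply Gj; auto.
    + exact Ga.
    + intro Qb. exact (nQI b Qb Gb).
    + intros x y Qx nQy. destruct (Part y) as [|Iy]. contradiction. apply Gbad; auto.
Qed.
End Sep.
End WHB.


Section Rep.
Context (A : WStr) (HW : isWHB A).
Let Hl := whb_lat A HW.
Local Notation m := (wmeet A).
Local Notation j := (wjoin A).
Local Notation i := (wimp A).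
Local Notation ci := (wcoimp A).
Local Notation o := (wone A).
Local Notation z := (wzero A).

Lemma sep_le a b : ~ le m a b -> exists P, primeFilter A P /\ P a /\ ~ P b.
Proof. intro nab.
  destruct (separation A HW (le m)) with (a := a) (b := b) as [Q [HQ [Qa [nQb _]]]]; auto.
  - intros x y x' y' E1 E2 E3. eapply (le_trans Hl); [exact E2|]. eapply (le_trans Hl); eauto.
  - intro x. apply (le_refl Hl).
  - intros x y w E1 E2. apply (le_trans Hl _ (m x (j y w))). apply (m_glb Hl). apply (le_refl Hl). exact E2.
    rewrite (lmD Hl). apply (j_lub Hl). apply (le_mr Hl). exact E1.
  - exists Q; auto.
Qed.

Lemma sep_R (P : A -> Prop) (HP : primeFilter A P) a b : ~ P (i a b) ->
  exists Q, primeFilter A Q /\ Q a /\ ~ Q b /\ (forall x y, P (i x y) -> Q x -> Q y).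
Proof. intro nab.
  destruct (separation A HW (fun x y => P (i x y))) with (a := a) (b := b) as [Q [HQ [Qa [nQb HQ2]]]]; auto.
  - intros x y x' y' E1 E2 E3. apply (pf_up A _ HP (i x y)); auto.
    eapply (le_trans Hl). apply (i_anti1 A HW). exact E2. apply (i_mono2 A HW). exact E3.
  - intro x. rewrite (i_refl A HW). apply (pf_one A _ HP).
  - intros x y w E1 E2.
    set (u := m (j y w) x).
    assert (P1 : P (i x u)).
    { unfold u. rewrite (i_mD A HW), (i_refl A HW), (lm1 Hl). exact E2. }
    assert (P2 : P (i u y)).
    { unfold u. rewrite (lmDr Hl), (i_jD A HW), (lmC Hl y x), (i_meet_l A HW).
      rewrite (lmC Hl), (lm1 Hl), (lmC Hl w x). exact E1. }
    apply (pf_up A _ HP (m (i x u) (i u y))). apply (pf_meet A _ HP); auto. apply (i_trans A HW).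
  - exists Q. split; auto. split; auto. split; auto.
    intros x y Pxy Qx. apply NNPP. intro nQy. exact (HQ2 x y Qx nQy Pxy).
Qed.

Lemma sep_S (P : A -> Prop) (HP : primeFilter A P) a b : P (ci a b) ->
  exists Q, primeFilter A Q /\ Q a /\ ~ Q b /\ (forall x y, Q x -> ~ Q y -> P (ci x y)).
Proof. intro Pab.
  destruct (separation A HW (fun x y => ~ P (ci x y))) with (a := a) (b := b) as [Q [HQ [Qa [nQb HQ2]]]]; auto.
  - intros x y x' y' E1 E2 E3 E4. apply E1. apply (pf_up A _ HP _ _ E4).
    eapply (le_trans Hl). apply (ci_mono1 A HW). exact E2. apply (ci_anti2 A HW). exact E3.
  - intro x. rewrite (ci_refl A HW). apply (pf_zero A _ HP).
  - intros x y w E1 E2 E3.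
    set (u := m x (j y w)).
    assert (C1 : ci x u = ci x (j y w)).
    { unfold u. rewrite (ci_mD A HW), (ci_refl A HW), (ljC Hl), (lj0 Hl). reflexivity. }
    assert (C2 : ci u y = ci (m x w) y).
    { unfold u. rewrite (lmD Hl), (ci_jD A HW).
      assert (Z : ci (m x y) y = z).
      { apply (le0_eq Hl). rewrite <- (ci_refl A HW y). apply (ci_mono1 A HW). apply (le_mr Hl). }
      rewrite Z, (ljC Hl), (lj0 Hl). reflexivity. }
    assert (P3 : P (j (ci x u) (ci u y))).
    { apply (pf_up A _ HP _ _ E3). apply (ci_trans A HW). }
    rewrite C1, C2 in P3. destruct (pf_prime A _ HP _ _ P3); auto.
  - exists Q. split; auto. split; auto. split; auto.
    intros x y Qx nQy. apply NNPP. exact (HQ2 x y Qx nQy).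
Qed.

Lemma clopen_sigma a : @clopen A (sigma a).
Proof. split.
  - intros P HP. exists [(a, true)]. split.
    + intros s [<-|[]]. exact HP.
    + intros Q HQ. apply (HQ (a, true)). left; reflexivity.
  - intros P HP. exists [(a, false)]. split.
    + intros s [<-|[]]. exact HP.
    + intros Q HQ. apply (HQ (a, false)). left; reflexivity.
Qed.

Context (h : closedT (PT A) (@clopen A)).
Definition sgm (a : A) : subT h := exist _ (sigma a) (clopen_sigma a).

Lemma subT_eq (x y : subT h) : proj1_sig x = proj1_sig y -> x = y.
Proof. destruct x as [x px], y as [y py]. simpl. intro E. subst. f_equal. apply proof_irrelevance. Qed.

Lemma set_ext (U V : X A -> Prop) : (forall P, U P <-> V P) -> U = V.
Proof. intro E. apply functional_extensionality. intro P. apply propositional_extensionality. apply E. Qed.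

Lemma sg_m a b : sgm (m a b) = tmeet (subT h) (sgm a) (sgm b).
Proof. apply subT_eq. simpl. apply set_ext. intros [P HP]. unfold sigma; simpl. split.
  - intro E. split; apply (pf_up A _ HP _ _ E); lat.
  - intros [E1 E2]. apply (pf_meet A _ HP); auto.
Qed.
Lemma sg_j a b : sgm (j a b) = tjoin (subT h) (sgm a) (sgm b).
Proof. apply subT_eq. simpl. apply set_ext. intros [P HP]. unfold sigma; simpl. split.
  - intro E. apply (pf_prime A _ HP); auto.
  - intros [E|E]; apply (pf_up A _ HP _ _ E); lat.
Qed.
Lemma sg_0 : sgm z = tzero (subT h).
Proof. apply subT_eq. simpl. apply set_ext. intros [P HP]. unfold sigma; simpl. split.
  - apply (pf_zero A _ HP).
  - intros []. Qed.
Lemma sg_1 : sgm o = tone (subT h).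
Proof. apply subT_eq. simpl. apply set_ext. intros [P HP]. unfold sigma; simpl. split.
  - auto.
  - intros _. apply (pf_one A _ HP). Qed.
Lemma sg_i a b : sgm (i a b) = wimp (M (subT h)) (sgm a) (sgm b).
Proof. apply subT_eq. simpl. apply set_ext. intros [P HP]. unfold sigma; simpl. split.
  - intros E [Q HQ] RPQ. simpl. destruct (classic (Q a)) as [Qa|nQa]; auto.
    right. exact (RPQ a b E Qa).
  - intro E. apply NNPP. intro nE. destruct (sep_R P HP a b nE) as [Q [HQ [Qa [nQb HR]]]].
    destruct (E (exist _ Q HQ)) as [E1|E1].
    + intros x y Pxy Qx. exact (HR x y Pxy Qx).
    + exact (E1 Qa).
    + exact (nQb E1).
Qed.
Lemma sg_ci a b : sgm (ci a b) = wcoimp (M (subT h)) (sgm a) (sgm b).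
Proof. apply subT_eq. simpl. apply set_ext. intros [P HP]. unfold sigma, tP; simpl. split.
  - intros E Hall. destruct (sep_S P HP a b E) as [Q [HQ [Qa [nQb HS]]]].
    apply (Hall (exist _ Q HQ)).
    + intros x y Qx nQy. exact (HS x y Qx nQy).
    + simpl. auto.
  - intro E. apply NNPP. intro nE. apply E. intros [Q HQ] SPQ [Qa nQb]. apply nE. exact (SPQ a b Qa nQb).
Qed.
Lemma sg_inj a b : sgm a = sgm b -> a = b.
Proof. intro E. assert (E' : sigma a = sigma b) by exact (f_equal (@proj1_sig _ _) E).
  assert (K : forall x y, sigma x = sigma y -> le m x y).
  { intros x y Exy. apply NNPP. intro nle. destruct (sep_le x y nle) as [P [HP [Px nPy]]].
    apply nPy. change (sigma y (exist _ P HP)). rewrite <- Exy. exact Px. }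
  apply (le_antisym Hl); apply K; auto.
Qed.

Lemma weval_sg (v : nat -> A) t : weval (M (subT h)) (fun k => sgm (v k)) t = sgm (weval A v t).
Proof. induction t; simpl; try rewrite IHt1, IHt2.
  - reflexivity.
  - symmetry. apply sg_m.
  - symmetry. apply sg_j.
  - symmetry. apply sg_i.
  - symmetry. apply sg_ci.
  - symmetry. apply sg_0.
  - symmetry. apply sg_1.
Qed.
End Rep.


Definition gG (p : wterm * wterm) : wterm * wterm := (WImp (snd p) (fst p), WOne).
Definition gH (p : wterm * wterm) : wterm * wterm := (WZero, WCoimp (snd p) (fst p)).
Definition cstep (l : list (wterm * wterm)) := l ++ map gG l ++ map gH l.
Fixpoint cnf (k : nat) : list (wterm * wterm) :=
  match k with
  | O => [(WVar 0, WVar 1); (WVar 1, WVar 0)]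
  | S k => cstep (cnf k)
  end.
Fixpoint Cond (l : list (wterm * wterm)) (p q : wterm) : list (wterm * wterm) :=
  match l with
  | [] => [(WMeet p q, p)]
  | (X, Y) :: l' => Cond l' (WMeet p X) q ++ Cond l' p (WJoin q Y)
  end.
Definition Phi k := Cond (cnf k) (WVar 2) (WVar 3) ++ Cond (cnf k) (WVar 3) (WVar 2).

Definition holdsW (A : WStr) (v : nat -> A) (e : wterm * wterm) : Prop :=
  weval A v (fst e) = weval A v (snd e).

Section Sem.
Context (B : TStr) (HT : isTense B).
Let HB := proj1 HT.
Let Hl := bool_lat B HB.
Let Hn1 := bool_n1 B HB.
Let Hn2 := bool_n2 B HB.
Local Notation m := (tmeet B).
Local Notation jn := (tjoin B).
Local Notation n := (tneg B).
Local Notation G := (tG B).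
Local Notation H := (tH B).
Variable v : nat -> B.
Local Notation ev := (weval (M B) v).

Definition piece (p : wterm * wterm) : B := jn (ev (fst p)) (n (ev (snd p))).
Fixpoint csem (l : list (wterm * wterm)) : B :=
  match l with [] => tone B | p :: l => m (piece p) (csem l) end.

Lemma csem_app l1 l2 : csem (l1 ++ l2) = m (csem l1) (csem l2).
Proof. induction l1; simpl. rewrite (lmC Hl), (lm1 Hl). reflexivity.
  rewrite IHl1, (lmA Hl). reflexivity. Qed.
Lemma csem_G l : csem (map gG l) = G (csem l).
Proof. induction l as [|[X Y] l IH]; simpl. symmetry. apply (G_1 B HT).
  rewrite IH, (G_m B HT). f_equal. unfold piece; simpl.
  rewrite (n1 Hl Hn1 Hn2), (lj0 Hl), (ljC Hl (ev X)). reflexivity. Qed.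
Lemma csem_H l : csem (map gH l) = H (csem l).
Proof. induction l as [|[X Y] l IH]; simpl. symmetry. apply (H_1 B HT).
  rewrite IH, (H_m B HT). f_equal. unfold piece, tP; simpl.
  unfold tP. rewrite (ljC Hl (tzero B)), (lj0 Hl), (nn Hl Hn1 Hn2), (nm Hl Hn1 Hn2), (nn Hl Hn1 Hn2), (ljC Hl (ev X)).
  reflexivity. Qed.
Lemma csem_cnf k : csem (cnf k) = miter B k (biT B (v 0) (v 1)).
Proof. induction k; simpl.
  - unfold piece, biT, bi; simpl. rewrite (lm1 Hl), (ljC Hl (v 0)), (ljC Hl (v 1)). apply (lmC Hl).
  - unfold cstep. rewrite !csem_app, csem_G, csem_H, IHk. reflexivity.
Qed.
Lemma cond_sem l p q : Forall (holdsW (M B) v) (Cond l p q) <-> le m (m (ev p) (csem l)) (ev q).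
Proof. revert p q. induction l as [|[X Y] l IH]; intros p q; simpl.
  - rewrite Forall_cons_iff. unfold holdsW; simpl. rewrite (lm1 Hl). split.
    + intros [E _]. exact E.
    + intro E. split. exact E. constructor.
  - rewrite Forall_app, !IH. simpl. unfold piece; simpl. apply (cond_step Hl Hn1 Hn2).
Qed.
Lemma phi_sem k : Forall (holdsW (M B) v) (Phi k) <->
  le m (miter B k (biT B (v 0) (v 1))) (biT B (v 2) (v 3)).
Proof. unfold Phi. rewrite Forall_app, !cond_sem, csem_cnf. simpl.
  unfold biT. rewrite (le_bi Hl Hn1 Hn2). tauto. Qed.
End Sem.

Section PhiCg.
Context (A : WStr) (HW : isWHB A).
Let Hl := whb_lat A HW.
Local Notation m := (wmeet A).
Local Notation j := (wjoin A).
Local Notation i := (wimp A).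
Local Notation ci := (wcoimp A).
Local Notation o := (wone A).
Local Notation z := (wzero A).
Context (r : A -> A -> Prop) (Hr : congW A r).
Let Rr := proj1 (proj1 Hr).
Let Rs := proj1 (proj2 (proj1 Hr)).
Let Rt := proj2 (proj2 (proj1 Hr)).
Let Rm := proj1 (proj2 Hr).
Let Rj := proj1 (proj2 (proj2 Hr)).
Let Ri := proj1 (proj2 (proj2 (proj2 Hr))).
Let Rci := proj2 (proj2 (proj2 (proj2 Hr))).
Definition lr x y := r (m x y) x.
Lemma lr_of_le x y : le m x y -> lr x y.
Proof. unfold lr, le. intro E. rewrite E. apply Rr. Qed.
Lemma lr_trans x y w : lr x y -> lr y w -> lr x w.
Proof. unfold lr. intros E1 E2.
  apply (Rt _ (m (m x y) w)). apply Rm. apply Rs, E1. apply Rr.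
  rewrite <- (lmA Hl). apply (Rt _ (m x y)). apply Rm. apply Rr. exact E2. exact E1. Qed.
Lemma lr_glb x y w : lr x y -> lr x w -> lr x (m y w).
Proof. unfold lr. intros E1 E2. rewrite (lmA Hl). apply (Rt _ (m x w)). apply Rm. exact E1. apply Rr. exact E2. Qed.
Lemma lr_lub x y w : lr x w -> lr y w -> lr (j x y) w.
Proof. unfold lr. intros E1 E2. rewrite (lmDr Hl). apply Rj; auto. Qed.

Variable v : nat -> A.
Local Notation ev := (weval A v).
Definition Inv (p : wterm * wterm) := lr (ev (snd p)) (ev (fst p)).

Lemma inv_step l : Forall Inv l -> Forall Inv (cstep l).
Proof. intro F. unfold cstep. apply Forall_app. split. exact F. apply Forall_app. split.
  - apply Forall_map. apply (Forall_impl _ (P := Inv)); auto. intros [X Y] E. unfold Inv in *; simpl in *.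
    unfold lr. rewrite (lmC Hl), (lm1 Hl).
    assert (E2 : i (ev Y) (ev X) = i (ev Y) (m (ev Y) (ev X)))
      by (rewrite (i_mD A HW), (i_refl A HW), (lmC Hl), (lm1 Hl); reflexivity).
    apply (Rt _ (i (ev Y) (ev Y))). rewrite E2. apply Ri. apply Rr. exact E.
    rewrite (i_refl A HW). apply Rr.
  - apply Forall_map. apply (Forall_impl _ (P := Inv)); auto. intros [X Y] E. unfold Inv in *; simpl in *.
    unfold lr. rewrite (m0 Hl). apply Rs.
    assert (Z : ci (m (ev Y) (ev X)) (ev X) = z).
    { apply (le0_eq Hl). rewrite <- (ci_refl A HW (ev X)). apply (ci_mono1 A HW). apply (le_mr Hl). }
    rewrite <- Z. apply Rci. apply Rs. exact E. apply Rr.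
Qed.

Lemma cond_lr l p q : Forall Inv l -> Forall (holdsW A v) (Cond l p q) -> lr (ev p) (ev q).
Proof. revert p q. induction l as [|[X Y] l IH]; intros p q FI FC; simpl in FC.
  - inversion FC as [|? ? E _]. unfold holdsW in E; simpl in E. unfold lr. rewrite E. apply Rr.
  - rewrite Forall_app in FC. destruct FC as [F1 F2]. inversion FI as [|? ? IXY FI']. unfold Inv in IXY; simpl in IXY.
    pose proof (IH _ _ FI' F1) as IH1. pose proof (IH _ _ FI' F2) as IH2. simpl in IH1, IH2.
    set (P := ev p) in *. set (Q := ev q) in *. set (X' := ev X) in *. set (Y' := ev Y) in *.
    apply (lr_trans _ (m P (j Q Y'))). apply lr_glb. apply lr_of_le, (le_refl Hl). exact IH2.
    apply (lr_trans _ (m P (j Q X'))). apply lr_glb. apply lr_of_le, (le_ml Hl).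
    apply (lr_trans _ (j Q Y')). apply lr_of_le, (le_mr Hl). apply lr_lub. apply lr_of_le, (le_jl Hl).
    apply (lr_trans _ X'). exact IXY. apply lr_of_le, (le_jr Hl).
    rewrite (lmD Hl). apply lr_lub. apply lr_of_le, (le_mr Hl). exact IH1.
Qed.
End PhiCg.

Lemma phi_cg (A : WStr) (HW : isWHB A) k a b c d :
  Forall (holdsW A (val4 a b c d)) (Phi k) -> CgW A a b c d.
Proof.
  intros F r Hr Rab. pose proof (whb_lat A HW) as Hl.
  pose proof Hr as Hr0. destruct Hr0 as [[Rr [Rs Rt]] [Rm _]].
  assert (FI : Forall (Inv A r (val4 a b c d)) (cnf k)).
  { clear F. induction k; simpl.
    - constructor; [|constructor; [|constructor]]; unfold Inv, lr; simpl.
      + rewrite <- (mm Hl b) at 2. apply Rm. apply Rr. exact Rab.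
      + rewrite <- (mm Hl a) at 2. apply Rm. apply Rr. apply Rs, Rab.
    - apply inv_step; auto. }
  unfold Phi in F. rewrite Forall_app in F. destruct F as [F1 F2].
  pose proof (cond_lr A HW r Hr _ _ _ _ FI F1) as L1.
  pose proof (cond_lr A HW r Hr _ _ _ _ FI F2) as L2. unfold lr in L1, L2; simpl in L1, L2.
  apply (Rt _ (wmeet A c d)). apply Rs, L1. rewrite (lmC Hl). exact L2.
Qed.


Fixpoint tr (t : wterm) : tterm :=
  match t with
  | WVar k => TVar k
  | WMeet s u => TMeet (tr s) (tr u)
  | WJoin s u => TJoin (tr s) (tr u)
  | WImp s u => TGt (TJoin (TNeg (tr s)) (tr u))
  | WCoimp s u => TNeg (THt (TNeg (TMeet (tr s) (TNeg (tr u)))))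
  | WZero => TZero
  | WOne => TOne
  end.

Lemma teval_tr (C : TStr) (v : nat -> C) t : teval C v (tr t) = weval (M C) v t.
Proof. induction t; simpl; try rewrite IHt1, IHt2; reflexivity. Qed.

Lemma congT_W (C : TStr) (HT : isTense C) r : congT C r <-> congW (M C) r.
Proof.
  pose proof (bool_lat C (proj1 HT)) as Hl. pose proof (bool_n1 C (proj1 HT)) as Hn1.
  pose proof (bool_n2 C (proj1 HT)) as Hn2.
  split.
  - intros [Heq [Rm [Rj [Rn [RG RH]]]]]. split; [exact Heq|].
    split; [exact Rm|]. split; [exact Rj|]. simpl. split.
    + intros a b c d E1 E2. apply RG. apply Rj; auto.
    + intros a b c d E1 E2. unfold tP. apply Rn, RH, Rn, Rm; auto.
  - intros [[Rr [Rs Rt]] [Rm [Rj [Ri Rci]]]]. simpl in *.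
    assert (Rn : forall x y, r x y -> r (tneg C x) (tneg C y)).
    { assert (K : forall x y, r x y -> r (tneg C x) (tmeet C (tneg C x) (tneg C y))).
      { intros x y Rxy.
        assert (E : tneg C x = tjoin C (tmeet C (tneg C x) y) (tmeet C (tneg C x) (tneg C y))).
        { rewrite <- (lmD Hl), Hn2, (lm1 Hl). reflexivity. }
        rewrite E at 1.
        apply (Rt _ (tjoin C (tmeet C (tneg C x) x) (tmeet C (tneg C x) (tneg C y)))).
        apply Rj. apply Rm. apply Rr. apply Rs, Rxy. apply Rr.
        rewrite (lmC Hl _ x), Hn1, (ljC Hl), (lj0 Hl). apply Rr. }
      intros x y Rxy. apply (Rt _ (tmeet C (tneg C x) (tneg C y))). apply K, Rxy.
      rewrite (lmC Hl). apply Rs. apply K. apply Rs, Rxy. }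
    split; [split; auto|]. split; [exact Rm|]. split; [exact Rj|]. split; [exact Rn|]. split.
    + intros a b Rab. pose proof (Ri _ _ _ _ (Rr (tone C)) Rab) as Q.
      rewrite (n1 Hl Hn1 Hn2), !(ljC Hl (tzero C)), !(lj0 Hl) in Q. exact Q.
    + intros a b Rab. pose proof (Rn _ _ (Rci _ _ _ _ (Rn _ _ Rab) (Rr (tzero C)))) as Q.
      unfold tP in Q. rewrite (n0 Hl Hn1 Hn2), !(lm1 Hl), !(nn Hl Hn1 Hn2) in Q. exact Q.
Qed.

Lemma CgT_W (C : TStr) (HT : isTense C) a b c d : CgT C a b c d <-> CgW (M C) a b c d.
Proof. unfold CgT, CgW. split; intros E r Hr Rab.
  - apply (E r); auto. exact (proj2 (congT_W C HT r) Hr).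
  - apply (E r); auto. exact (proj1 (congT_W C HT r) Hr).
Qed.

Lemma stab (B : TStr) (HT : isTense B) n (Hn : forall x : B, le (tmeet B) (miter B n x) (miter B (S n) x)) :
  forall k x, le (tmeet B) (miter B n x) (miter B k x).
Proof.
  pose proof (bool_lat B (proj1 HT)) as Hl.
  assert (D : forall d x, le (tmeet B) (miter B n x) (miter B (n + d) x)).
  { induction d; intro x. rewrite Nat.add_0_r. apply (le_refl Hl).
    eapply (le_trans Hl). apply (IHd x). rewrite (miter_add B n d x).
    replace (n + S d) with (S n + d) by lia. rewrite (miter_add B (S n) d x). apply Hn. }
  intros k x. destruct (le_lt_dec k n) as [Hk|Hk].
  - apply (miter_anti B HT). exact Hk.
  - replace k with (n + (k - n)) by lia. apply D.
Qed.

Lemma cg_phi (N : TStr -> Prop) (HN : varietyT N) n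
  (Hn : forall B, N B -> forall x : B, le (tmeet B) (miter B n x) (miter B (S n) x))
  (A : WStr) (HW : isWHB A) (TA : T_in N A) a b c d :
  CgW A a b c d -> Forall (holdsW A (val4 a b c d)) (Phi n).
Proof.
  intro Cg. destruct TA as [h NB]. set (B := subT h) in *.
  assert (TB : isTense B) by (apply (varT_tense N HN); exact NB).
  set (u := biT B (sgm A h a) (sgm A h b)).
  set (r := fun x y => thetaT B u (sgm A h x) (sgm A h y)).
  assert (Hr : congW A r).
  { destruct (thetaT_cong B TB u) as [[Rr [Rs Rt]] [Rm [Rj [Rn [RG RH]]]]].
    unfold r. split; [split; [|split]|split; [|split; [|split]]].
    - intro x. apply Rr.
    - intros x y. apply Rs.
    - intros x y w. apply Rt.
    - intros a1 b1 c1 d1 E1 E2. rewrite (sg_m A HW h a1 c1), (sg_m A HW h b1 d1). apply Rm; auto.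
    - intros a1 b1 c1 d1 E1 E2. rewrite (sg_j A HW h a1 c1), (sg_j A HW h b1 d1). apply Rj; auto.
    - intros a1 b1 c1 d1 E1 E2. rewrite (sg_i A HW h a1 c1), (sg_i A HW h b1 d1). apply RG, Rj; auto.
    - intros a1 b1 c1 d1 E1 E2. rewrite (sg_ci A HW h a1 c1), (sg_ci A HW h b1 d1). apply Rn, RH, Rn, Rm; auto. }
  assert (Rcd : r c d).
  { apply Cg. exact Hr. exists 0. apply (le_refl (bool_lat B (proj1 TB))). }
  destruct Rcd as [k E].
  assert (E' : le (tmeet B) (miter B n u) (biT B (sgm A h c) (sgm A h d))).
  { eapply (le_trans (bool_lat B (proj1 TB))); [|exact E]. apply (stab B TB n (Hn B NB)). }
  set (v := fun k => sgm A h (val4 a b c d k)).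
  assert (Fv : Forall (holdsW (M B) v) (Phi n)).
  { apply (phi_sem B TB v n). exact E'. }
  apply (Forall_impl _ (P := holdsW (M B) v)); auto.
  intros e He. unfold holdsW in *. unfold v in He. rewrite !(weval_sg A HW h) in He.
  apply (sg_inj A HW h). exact He.
Qed.

Theorem proposition6p21 (K : WStr -> Prop) (N : TStr -> Prop) :
  varietyW K -> varietyT N -> tense_companion K N ->
  (EDPC_W K <-> EDPC_T N).
Proof.
  intros HK HN [TK TN].
  assert (KW : forall A, K A -> isWHB A).
  { destruct HK as [E HE]. intros A KA. apply HE in KA. apply KA. }
  split.
  - intros [zw Hw]. exists (map (fun e => (tr (fst e), tr (snd e))) zw).
    intros C NC a b c d.
    assert (TC : isTense C) by (apply (varT_tense N HN); exact NC).
    rewrite (CgT_W C TC). rewrite (Hw (M C) (TN C NC) a b c d).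
    rewrite Forall_map. simpl. split; apply Forall_impl; intros e; rewrite !teval_tr; auto.
  - intro ET. destruct (uniform N HN ET) as [n Hn]. exists (Phi n).
    intros C KC a b c d. split.
    + apply (cg_phi N HN n Hn C (KW C KC) (TK C KC)).
    + apply (phi_cg C (KW C KC)).
Qed.
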